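(* Let $T=T(n,a,b)$ with $a\ge 0$, $b\ge a+2$ and $2(a+b)<n-1$, and let $\ell=n-a-b$ and $r=\ell-b-a$. If $b<\frac{\ell}{2}$, then $$\rho(T)>(2a+1)(r-1)+\frac{r}{r-1}\sum_{i=1}^{\lfloor\frac{r-1}{2}\rfloor}(r-2i).$$
   Context: Hypergraphs have edges that are vertex subsets of size at least two; distance $d_T(u,v)$ in a hypertree is the length of a shortest loose path (an alternating sequence of distinct vertices and distinct edges $(v_0,e_1,v_1,\dots,e_p,v_p)$ with $v_{i-1},v_i\in e_i$ and non-consecutive edges disjoint). $\rho(T)$ is the largest eigenvalue of the distance matrix $D(T)=(d_T(u,v))_{u,v}$. For integers $n,a,b$ with $0\le a\le b$ and $a+b\le\lfloor\frac{n-1}{2}\rfloor$, put $\ell=n-a-b$ and $I=\{1,\dots,a\}\cup\{\ell-b,\dots,\ell-1\}$; $T(n,a,b)$ is the hypertree with vertex set $\{v_1,\dots,v_\ell\}\cup\{w_i:i\in I\}$ and edges $\{v_i,w_i,v_{i+1}\}$ for $i\in I$ and $\{v_i,v_{i+1}\}$ for $i\in\{1,\dots,\ell-1\}\setminus I$. *)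

(* Defs.v *)
From HB Require Import structures.
From mathcomp Require Import all_boot all_order all_algebra.
From mathcomp Require Import reals.
Set Implicit Arguments. Unset Strict Implicit. Unset Printing Implicit Defensive.
Import Order.TTheory GRing.Theory Num.Theory.

(* x : vertices v_0..v_p, e : edges e_1..e_p (e i is the edge e_{i+1}).
   Conditions: vertices distinct, edges distinct, each edge in E,
   v_{i-1}, v_i in e_i, non-consecutive edges disjoint. *)
Definition loose_path (V : finType) (E : seq {set V}) (p : nat)
  (x : {ffun 'I_p.+1 -> V}) (e : {ffun 'I_p -> {set V}}) : bool :=
  [&& injectiveb x, injectiveb e,
      [forall i : 'I_p, [&& e i \in E, x (inord i) \in e i & x (inord i.+1) \in e i]]
    & [forall i : 'I_p, forall j : 'I_p, (i.+1 < j)%N ==> [disjoint e i & e j]]].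

Definition has_loose_path (V : finType) (E : seq {set V}) (u v : V) (p : nat) : bool :=
  [exists x : {ffun 'I_p.+1 -> V}, exists e : {ffun 'I_p -> {set V}},
     [&& x ord0 == u, x ord_max == v & loose_path E x e]].

(* d(u,v) = length of a shortest loose path from u to v (a loose path has
   distinct vertices, so its length is < #|V|; the value #|V| only occurs
   for disconnected pairs, which do not arise in a hypertree). *)
Definition hdist (V : finType) (E : seq {set V}) (u v : V) : nat :=
  find (has_loose_path E u v) (iota 0 #|V|).

Definition dist_matrix (R : realType) (n : nat) (E : seq {set 'I_n}) : 'M[R]_n :=
  \matrix_(i, j) ((hdist E i j)%:R)%R.

Definition is_largest_eigenvalue (R : realType) (n : nat) (A : 'M[R]_n) (rho : R) : Prop :=
  eigenvalue A rho /\ forall mu : R, eigenvalue A mu -> (mu <= rho)%R.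

(* Vertices are 'I_n.  v_j (1 <= j <= l) is the vertex j-1;
   w_i for i in {1..a} is the vertex l+i-1, and
   w_i for i in {l-b..l-1} is the vertex l+a+(i-(l-b)). *)
Definition Tell (n a b : nat) : nat := n - a - b.

Definition inI (n a b i : nat) : bool :=
  ((1 <= i <= a) || (Tell n a b - b <= i <= Tell n a b - 1))%N.

Definition wvert (n a b i : nat) : nat :=
  if (i <= a)%N then (Tell n a b + i - 1)%N
  else (Tell n a b + a + (i - (Tell n a b - b)))%N.

Definition nat_set (n : nat) (s : seq nat) : {set 'I_n} :=
  [set x : 'I_n | val x \in s].

(* edges {v_i, w_i, v_{i+1}} for i in I, {v_i, v_{i+1}} otherwise, 1 <= i <= l-1 *)
Definition T_edges (n a b : nat) : seq {set 'I_n} :=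
  [seq nat_set n (if inI n a b i then [:: i.-1; wvert n a b i; i] else [:: i.-1; i])
  | i <- iota 1 (Tell n a b - 1)].

(* Main.v *)
Require Import Defs.
From HB Require Import structures.
From mathcomp Require Import all_boot all_order all_algebra.
From mathcomp Require Import reals all_classical all_reals all_analysis.
From mathcomp Require Import reals all_classical all_reals all_analysis.
From mathcomp Require Import ring lra zify.
Import Order.TTheory GRing.Theory Num.Theory.
Set Implicit Arguments. Unset Strict Implicit. Unset Printing Implicit Defensive.
Section Sym.
Variables (V : finType) (E : seq {set V}).

Lemma loose_rev p x e : loose_path E x e ->
  loose_path E [ffun i : 'I_p.+1 => x (rev_ord i)] [ffun i : 'I_p => e (rev_ord i)].
Proof.
case/and4P => xi ei /forallP he /forallP hd.
apply/and4P; split.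
- apply/injectiveP => i j; rewrite !ffunE => /(injectiveP _ xi) /rev_ord_inj //.
- apply/injectiveP => i j; rewrite !ffunE => /(injectiveP _ ei) /rev_ord_inj //.
- apply/forallP => i; rewrite !ffunE.
  have := he (rev_ord i); case/and3P => -> h1 h2 /=.
  have ip := ltn_ord i.
  rewrite (_ : rev_ord (inord i) = inord (rev_ord i).+1); last first.
    by apply: val_inj; rewrite /= !inordK //=; lia.
  rewrite h2 /=.
  rewrite (_ : rev_ord (inord i.+1) = inord (rev_ord i)) //.
  by apply: val_inj; rewrite /= !inordK //=; lia.
- apply/forallP => i; apply/forallP => j; rewrite !ffunE; apply/implyP => ij.
  have := hd (rev_ord j); move/forallP => /(_ (rev_ord i)) /implyP.
  have ip := ltn_ord i; have jp := ltn_ord j.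
  rewrite disjoint_sym; apply; rewrite /=; lia.
Qed.

Lemma hlp_sym u v p : has_loose_path E u v p -> has_loose_path E v u p.
Proof.
case/existsP => x /existsP [e /and3P [/eqP xu /eqP xv hl]].
apply/existsP; exists [ffun i : 'I_p.+1 => x (rev_ord i)].
apply/existsP; exists [ffun i : 'I_p => e (rev_ord i)].
rewrite !ffunE loose_rev // andbT.
rewrite (_ : rev_ord ord0 = ord_max); last by apply: val_inj; rewrite /= subn1.
rewrite (_ : rev_ord ord_max = ord0); last by apply: val_inj; rewrite /= subnn.
by rewrite xu xv !eqxx.
Qed.

Lemma hdist_sym u v : hdist E u v = hdist E v u.
Proof.
rewrite /hdist; apply: eq_find => k; apply/idP/idP; exact: hlp_sym.
Qed.

End Sym.

Definition pos (n a b k : nat) : nat :=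
  if (k < Tell n a b)%N then k
  else if (k < Tell n a b + a)%N then (k - Tell n a b)%N
  else (k - a - b - 1)%N.

Lemma pos_lt n a b k : (pos n a b k <= k)%N.
Proof. rewrite /pos; case: ifP => //; case: ifP => _ _; lia. Qed.

Lemma edge_pos n a b e (x y : 'I_n) : (b <= Tell n a b)%N ->
  e \in T_edges n a b -> x \in e -> y \in e -> (pos n a b x <= (pos n a b y).+1)%N.
Proof.
move=> hb /mapP [i]; rewrite mem_iota => /andP[i1 i2] ->.
suff H : forall z, z \in (if inI n a b i then [:: i.-1; wvert n a b i; i] else [:: i.-1; i]) ->
   (i.-1 <= pos n a b z <= i)%N.
  rewrite !finset.in_set => /H /andP[h1 h2] /H /andP[h3 h4]; move: h1 h2 h3 h4; rewrite /=; lia.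
move=> z; case: ifP => hI; rewrite !inE; last first.
  by case/orP => /eqP ->; rewrite /pos; case: ifPn => h; try case: ifPn => h'; lia.
case/or3P => /eqP ->; rewrite /pos; try (case: ifPn => h; try case: ifPn => h'; lia).
move: hI; rewrite /inI /wvert.
set l := Tell n a b in hb i2 *.
case: (leqP i a) => hia /=; repeat (case: ifPn => ?); lia.
Qed.

Lemma walk_bound (f : nat -> nat) p :
  (forall k, (k < p)%N -> (f k <= (f k.+1).+1)%N /\ (f k.+1 <= (f k).+1)%N) ->
  (f 0 <= f p + p)%N /\ (f p <= f 0 + p)%N.
Proof.
elim: p => [|p IH] h; first by rewrite !addn0.
have [h1 h2] := IH (fun k hk => h k (ltnW hk)).
have [h3 h4] := h p (ltnSn p); lia.
Qed.

Lemma hdist_lb n a b (u v : 'I_n) : (b <= Tell n a b)%N ->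
  (pos n a b u <= pos n a b v + hdist (T_edges n a b) u v)%N /\
  (pos n a b v <= pos n a b u + hdist (T_edges n a b) u v)%N.
Proof.
move=> hb.
rewrite /hdist; set P := has_loose_path _ _ _.
have [hlt|hge] := ltnP (find P (iota 0 #|'I_n|)) (size (iota 0 #|'I_n|)).
  have hh : has P (iota 0 #|'I_n|) by rewrite has_find.
  have := nth_find 0 hh; rewrite nth_iota ?add0n; last by rewrite size_iota in hlt.
  set p := find P _; rewrite /P => /existsP [x /existsP [e /and3P [/eqP xu /eqP xv hl]]].
  case/and4P: hl => _ _ /forallP he _.
  have := @walk_bound (fun k => pos n a b (x (inord k))) p.
  have -> : x (inord 0) = u by rewrite -xu; congr (x _); apply: val_inj; rewrite /= inordK.
  have -> : x (inord p) = v by rewrite -xv; congr (x _); apply: val_inj; rewrite /= inordK.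
  apply=> k kp; have := he (Ordinal kp); case/and3P => h1 h2 h3.
  by split; apply: (edge_pos hb h1).
have -> : find P (iota 0 #|'I_n|) = n.
  have hs : size (iota 0 #|'I_n|) = n by rewrite size_iota card_ord.
  have := find_size P (iota 0 #|'I_n|); rewrite hs in hge *; lia.
have := pos_lt n a b u; have := pos_lt n a b v; have := ltn_ord u; have := ltn_ord v; lia.
Qed.

Lemma tri_sum l : (\sum_(j < l) (l - j)).*2 = l * l.+1.
Proof.
elim: l => [|l IH]; first by rewrite big_ord0.
rewrite big_ord_recl /= subn0.
rewrite (eq_bigr (fun j : 'I_l => l - j)); last by move=> j _; rewrite /bump /= add1n subSS.
rewrite doubleD IH -muln2; lia.
Qed.

Lemma G_sum l : 3 * (\sum_(j < l) \sum_(i < l) ((i - j) + (j - i))) + l = l ^ 3.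
Proof.
elim: l => [|l IH]; first by rewrite big_ord0.
rewrite big_ord_recr /=.
rewrite (eq_bigr (fun j : 'I_l => \sum_(i < l) ((i - j) + (j - i)) + (l - j))); last first.
  move=> j _; rewrite big_ord_recr /=; congr (_ + _).
  have := ltn_ord j; lia.
rewrite big_split /= big_ord_recr /= subnn addn0.
have -> : \sum_(i < l) (i - l + (l - i)) = \sum_(i < l) (l - i).
  by apply: eq_bigr => i _; have := ltn_ord i; lia.
have := tri_sum l; rewrite -muln2 => h.
move: IH h; set G := \sum_(j < l) _; set T := \sum_(j < l) _; move=> IH h; rewrite !expnS expn0 in IH *; nia.
Qed.

Lemma S_sum r m : (2 * m < r)%N ->
  \sum_(1 <= i < m.+1) (r - 2 * i) + m * m.+1 = m * r.
Proof.
elim: m => [|m IH] h; first by rewrite big_geq.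
rewrite big_nat_recr //=.
have h2 : (2 * m < r)%N by lia.
have := IH h2; nia.
Qed.

Lemma sum_cond_widen l n (F : nat -> nat) : (l <= n)%N ->
  \sum_(j < n) ((j < l) * F j) = \sum_(j < l) F j.
Proof.
move=> hl; rewrite (big_ord_widen n F hl) [RHS]big_mkcond; apply: eq_bigr => j _.
by case: (j < l)%N; rewrite ?mul1n ?mul0n.
Qed.

Lemma final_nat a b l r : (a + 2 <= b)%N -> (2 * b < l)%N -> r = (l - b - a)%N ->
  (4 + 12 * (2 * a + 1) * (r - 1) + 3 * r * (r - 1) < 4 * l ^ 2)%N.
Proof.
move=> h1 h2 ->.
have hl : l = (l - b - a) + a + b by lia.
set q := (l - b - a - 1)%N.
have hq : (l - b - a = q + 1)%N by rewrite /q; lia.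
rewrite hq in hl *.
have hlb : (q + 2 * a + 3 <= l)%N by lia.
have : ((q + 2 * a + 3) ^ 2 <= l ^ 2)%N by rewrite leq_sqr.
have := (nat_AGM2 q (4 * a)).1.
nia.
Qed.

Lemma S_bound r : (3 <= r)%N ->
  (4 * \sum_(1 <= i < ((r - 1) %/ 2).+1) (r - 2 * i) <= (r - 1) ^ 2)%N.
Proof.
move=> hr; set m := ((r - 1) %/ 2)%N.
have hm : (m * 2 <= r - 1)%N by rewrite /m leq_trunc_div.
have h2 : (2 * m < r)%N by lia.
have := S_sum h2.
have := (nat_AGM2 m (r - 1 - m)).1.
have -> : (m + (r - 1 - m) = r - 1)%N by lia.
nia.
Qed.
Import numFieldNormedType.Exports.
Local Open Scope classical_set_scope.
Local Open Scope ring_scope.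
Section Ray.
Variables (R : realType) (n : nat) (M : 'M[R]_n).

Lemma e_add (A B : 'M[R]_1) : (A + B) 0 0 = A 0 0 + B 0 0. Proof. by rewrite mxE. Qed.
Lemma e_opp (A B : 'M[R]_1) : (A - B) 0 0 = A 0 0 - B 0 0. Proof. by rewrite !mxE. Qed.
Lemma e_scale k (A : 'M[R]_1) : (k *: A) 0 0 = k * A 0 0. Proof. by rewrite mxE. Qed.

Definition qf (v : 'rV[R]_n) : R := (v *m M *m v^T) 0 0.
Definition nf (v : 'rV[R]_n) : R := (v *m v^T) 0 0.

Lemma nfE v : nf v = \sum_j v 0 j ^+ 2.
Proof. by rewrite /nf !mxE; apply: eq_bigr => j _; rewrite mxE expr2. Qed.

Lemma nf_ge0 v : 0 <= nf v.
Proof. by rewrite nfE; apply: sumr_ge0 => j _; rewrite sqr_ge0. Qed.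

Lemma nf_eq0 v : nf v = 0 -> v = 0.
Proof.
rewrite nfE => /psumr_eq0P h; apply/matrixP => i j; rewrite mxE (ord1 i).
by apply/eqP; rewrite -sqrf_eq0 h // => k _; rewrite sqr_ge0.
Qed.

Lemma nf_gt0 v : v != 0 -> 0 < nf v.
Proof.
move=> v0; rewrite lt_def nf_ge0 andbT; apply/eqP => /nf_eq0 h.
by rewrite h eqxx in v0.
Qed.

Lemma qfZ k v : qf (k *: v) = k ^+ 2 * qf v.
Proof.
by rewrite /qf -!scalemxAl linearZ /= -scalemxAr !e_scale mulrA -expr2.
Qed.

Lemma nfZ k v : nf (k *: v) = k ^+ 2 * nf v.
Proof.
by rewrite /nf -!scalemxAl linearZ /= -scalemxAr !e_scale mulrA -expr2.
Qed.

Hypothesis sym : M^T = M.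

Lemma bil_sym (u v : 'rV[R]_n) : (v *m M *m u^T) 0 0 = (u *m M *m v^T) 0 0.
Proof.
have -> : u *m M *m v^T = (v *m M *m u^T)^T.
  by rewrite !trmx_mul trmxK sym mulmxA.
by rewrite [RHS]mxE.
Qed.

Lemma qf_exp u v t : qf (u + t *: v) = qf u + 2%:R * t * (u *m M *m v^T) 0 0 + t ^+ 2 * qf v.
Proof.
rewrite /qf linearD /= !(mulmxDl, mulmxDr) linearZ /= -!scalemxAl -!scalemxAr !e_add !e_scale.
rewrite (bil_sym u v); ring.
Qed.

Lemma nf_exp (u v : 'rV[R]_n) t : nf (u + t *: v) = nf u + 2%:R * t * (u *m v^T) 0 0 + t ^+ 2 * nf v.
Proof.
rewrite /nf linearD /= !(mulmxDl, mulmxDr) linearZ /= -!scalemxAl -!scalemxAr !e_add !e_scale.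
have -> : (v *m u^T) 0 0 = (u *m v^T) 0 0.
  have -> : v *m u^T = (u *m v^T)^T by rewrite trmx_mul trmxK.
  by rewrite [LHS]mxE.
ring.
Qed.


Lemma cont_sum (T : topologicalType) (I : finType) (f : I -> T -> R) :
  (forall i, continuous (f i)) -> continuous (fun x => \sum_i f i x).
Proof.
move=> fc x; apply: cvg_big => //; last by move=> i _; exact: fc.
exact: (@pseudometric_normed_Zmodule.add_continuous R R^o).
Qed.

Lemma qf_cont : continuous qf.
Proof.
have -> : qf = fun v => \sum_j (\sum_i v 0 i * M i j) * v 0 j.
  by apply/funext => v; rewrite /qf !mxE; apply: eq_bigr => j _; rewrite !mxE.
apply: cont_sum => j v; apply: continuousM; last exact: coord_continuous.
apply: cont_sum => i; move=> w; apply: continuousM; first exact: coord_continuous.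
exact: cst_continuous.
Qed.

Lemma nf_cont : continuous nf.
Proof.
have -> : nf = fun v => \sum_j v 0 j * v 0 j.
  by apply/funext => v; rewrite /nf !mxE; apply: eq_bigr => j _; rewrite !mxE.
apply: cont_sum => j v; apply: continuousM; exact: coord_continuous.
Qed.

Lemma quad_lemma (al be : R) : 0 <= al -> (forall t, 2%:R * t * al + t ^+ 2 * be <= 0) -> al = 0.
Proof.
move=> al0 h; apply/eqP; rewrite eq_le al0 andbT; apply/negP => /negP; rewrite -ltNge => alp.
pose c := `|be| + 1.
have cp : 0 < c by rewrite /c ltr_pwDr.
pose t := al / c.
have tp : 0 < t by rewrite divr_gt0.
have tc : t * c = al by rewrite /t mulfVK // gt_eqF.
have hb : - `|be| <= be by rewrite lerNl ler_normr lexx orbT.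
have := h t; rewrite /c in tc.
nra.
Qed.

Lemma rayleigh_max (y : 'rV[R]_n) : y != 0 ->
  exists lam, is_largest_eigenvalue M lam /\ qf y <= lam * nf y.
Proof.
move=> y0.
pose A := [set v : 'rV[R]_n | `|v| = 1].
pose g := fun v => qf v / nf v.
have Ane : A !=set0.
  exists (`|y|^-1 *: y); rewrite /A /= normrZ normfV normr_id mulVf //.
  by rewrite normr_eq0.
have Acomp : compact A.
  apply: bounded_closed_compact.
  - exists 1; split; first by rewrite num_real.
    by move=> N N1 v /= Av; rewrite Av ltW.
  - have -> : A = (fun v : 'rV[R]_n => `|v|) @^-1` [set x : R | x = 1] by [].
    apply: (proj1 (continuous_closedP (fun v : 'rV[R]_n => `|v|)) (@norm_continuous _ _)).
    exact: closed_eq.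
have gc : {within A, continuous g}.
  apply: continuous_in_subspaceT => v; rewrite inE /A /= => v1.
  have v0 : v != 0.
    by apply/eqP=> h; move: v1; rewrite h normr0 => /eqP; rewrite eq_sym oner_eq0.
  apply: continuousM; first exact: qf_cont.
  apply: continuousV; first by rewrite gt_eqF // nf_gt0.
  exact: nf_cont.
have [u uA umax] := compact_EVT_max Ane Acomp gc.
have u0 : u != 0.
  move: uA; rewrite inE /A /= => v1.
  by apply/eqP=> h; move: v1; rewrite h normr0 => /eqP; rewrite eq_sym oner_eq0.
set lam := g u.
have key : forall w, qf w <= lam * nf w.
  move=> w; have [->|w0] := eqVneq w 0.
    rewrite -(scale0r (0 : 'rV[R]_n)) qfZ nfZ expr0n /= !mul0r mulr0 //.
  pose k := `|w|^-1.
  have kA : k *: w \in A.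
    by rewrite inE /A /= normrZ normfV normr_id mulVf // normr_eq0.
  have := umax _ kA; rewrite /g qfZ nfZ.
  have k0 : k ^+ 2 != 0 by rewrite expf_neq0 // invr_eq0 normr_eq0.
  rewrite -mulf_div divff // mul1r ler_pdivrMr //; last exact: nf_gt0.
have qu : qf u = lam * nf u.
  by rewrite /lam /g mulfVK // gt_eqF // nf_gt0.
have eig : u *m M = lam *: u.
  set res := u *m M - lam *: u.
  have hres : (u *m M *m res^T) 0 0 - lam * (u *m res^T) 0 0 = nf res.
    by rewrite /nf {3}/res mulmxBl -scalemxAl e_opp e_scale.
  have h : forall t, 2%:R * t * nf res + t ^+ 2 * (qf res - lam * nf res) <= 0.
    move=> t; have := key (u + t *: res); rewrite qf_exp nf_exp qu -hres.
    move=> hh; rewrite -subr_ge0; rewrite -subr_ge0 in hh.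
    lra.
  have := @quad_lemma _ _ (nf_ge0 res) h => /nf_eq0 /eqP.
  by rewrite subr_eq0 => /eqP.
exists lam; split; last exact: key.
split; first by apply/eigenvalueP; exists u.
move=> mu /eigenvalueP [w wM w0].
have : qf w = mu * nf w by rewrite /qf wM -scalemxAl e_scale.
move=> qw; have := key w; rewrite qw ler_pM2r //; exact: nf_gt0.
Qed.

End Ray.

Theorem lemma3p4 (R : realType) (n a b : nat) :
  (a + 2 <= b)%N ->
  (2 * (a + b) < n - 1)%N ->
  (2 * b < Tell n a b)%N ->
  let r := (Tell n a b - b - a)%N in
  exists rho : R,
    is_largest_eigenvalue (dist_matrix R (T_edges n a b)) rho /\
    rho > (2 * a + 1)%:R * (r - 1)%:R
          + r%:R / (r - 1)%:R * \sum_(1 <= i < ((r - 1) %/ 2).+1) (r - 2 * i)%:R.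
Proof.
move=> Hab Hn Hb r.
have hlE : Tell n a b = (n - a - b)%N by [].
set l := Tell n a b in Hb r hlE *.
have hbl : (b <= l)%N by lia.
have hln : (l <= n)%N by lia.
have hl0 : (0 < l)%N by lia.
set D := dist_matrix R (T_edges n a b).
have sym : D^T = D.
  by apply/matrixP => i j; rewrite !mxE hdist_sym.
pose y : 'rV[R]_n := \row_j ((j < l)%N : nat)%:R.
have nfy : nf y = l%:R.
  rewrite nfE.
  rewrite (eq_bigr (fun j : 'I_n => ((j < l)%N * 1%N)%:R)); last first.
    by move=> j _; rewrite mxE; case: (j < l)%N; rewrite ?expr1n ?expr0n.
  by rewrite -natr_sum (sum_cond_widen (fun _ => 1%N) hln) big_const_ord iter_addn_0 mul1n.
have y0 : y != 0.
  apply/eqP => h; move: nfy; rewrite h nfE big1; last by move=> j _; rewrite mxE expr0n.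
  by move/eqP; rewrite eq_sym pnatr_eq0; lia.
have [lam [Hlar Hq]] := rayleigh_max sym y0.
exists lam; split => //.
have qfy : qf D y = (\sum_(j < n) (\sum_(i < n) (i < l)%N * hdist (T_edges n a b) i j) * (j < l)%N)%:R.
  rewrite /qf !mxE natr_sum; apply: eq_bigr => j _; rewrite !mxE natrM natr_sum; congr (_ * _).
  by apply: eq_bigr => i _; rewrite !mxE natrM.
have Gle : (\sum_(j < l) \sum_(i < l) ((i - j) + (j - i)) <=
   \sum_(j < n) (\sum_(i < n) (i < l)%N * hdist (T_edges n a b) i j) * (j < l)%N)%N.
  rewrite -(sum_cond_widen (fun j => \sum_(i < l) ((i - j) + (j - i)))%N hln); apply: leq_sum => j _.
  case: (ltnP j l) => hj /=; last by rewrite !muln0 mul0n.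
  rewrite !muln1 mul1n -(sum_cond_widen (fun i => (i - j) + (j - i))%N hln); apply: leq_sum => i _.
  case: (ltnP i l) => hi /=; last by rewrite !mul0n.
  rewrite !mul1n; have := hdist_lb i j hbl; rewrite /pos -/l hi hj; lia.
have hr3 : (3 <= r)%N by rewrite /r; lia.
have hS := S_bound hr3.
have hF := final_nat Hab Hb (erefl _ : r = (l - b - a)%N).
have hG := G_sum l.
set G := (\sum_(j < l) \sum_(i < l) ((i - j) + (j - i)))%N in Gle hG.
have HG : G%:R <= lam * l%:R :> R.
  rewrite qfy nfy in Hq; apply: le_trans Hq; by rewrite ler_nat.
have HG3 : 3 * G%:R + l%:R = l%:R ^+ 3 :> R.
  by have := congr1 (fun x => x%:R : R) hG; rewrite /= natrD natrM natrX.
rewrite -natr_sum.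
set S := (\sum_(1 <= i < _) _)%N in hS *.
have HS : 4 * S%:R <= ((r - 1)%:R) ^+ 2 :> R.
  by rewrite -(ler_nat R) natrM natrX in hS.
have HF : (r - 1)%:R + 2 * a%:R + 3 <= l%:R :> R.
  by rewrite -natrM -!natrD ler_nat /r; lia.
have hrr : r%:R = (r - 1)%:R + 1 :> R.
  by rewrite natr1; congr (_%:R); lia.
rewrite natrD natrM hrr.
have HQ : 2 <= (r - 1)%:R :> R by rewrite (ler_nat R 2); lia.
have HL : 0 < l%:R :> R by rewrite ltr0n.
have HS0 : 0 <= S%:R :> R by [].
have HA : 0 <= a%:R :> R by [].
move: HG HG3 HS HF HQ HL HS0 HA.
set Q := (r - 1)%:R; set L := l%:R; set A := a%:R; set Sr := S%:R; set Gr := G%:R.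
move=> HG HG3 HS HF HQ HL HS0 HA.
have h1 : L ^+ 2 - 1 <= 3 * lam.
  rewrite -(ler_pM2r HL); nra.
have h2 : (Q + 1) / Q * Sr <= (Q + 1) * Q / 4%:R.
  rewrite mulrAC ler_pdivrMr; last lra.
  rewrite mulrAC ler_pdivlMr; last lra.
  nra.
have h3 : 0 <= (Q - 4%:R * A) ^+ 2 by apply: sqr_ge0.
have h4 : (Q + 2%:R * A + 3%:R) ^+ 2 <= L ^+ 2.
  by rewrite ler_sqr ?nnegrE; lra.
nra.
Qed.
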